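(* Let $X$ be a compact metric space and $f\colon X\to X$ continuous. If $(X,f)$ has two-sided cofinal orbital shadowing, then it has property $P_a$.
   Context: $d_H$ is the Hausdorff metric. A full trajectory is $\langle z_i\rangle_{i\in\mathbb Z}$ with $f(z_i)=z_{i+1}$. For two-sided sequences, $\omega(\langle x_i\rangle)=\bigcap_{M}\overline{\{x_n:n>M\}}$, $\alpha(\langle x_i\rangle)=\bigcap_{M}\overline{\{x_n:n<-M\}}$. $ICT_f$ is the set of nonempty closed internally chain transitive sets ($A$ is internally chain transitive if for all $a,b\in A$ and $\delta>0$ there exist $x_0=a,\dots,x_N=b$ in $A$, $N\ge1$, with $d(f(x_i),x_{i+1})<\delta$). Property $P_a$: for every $A\in ICT_f$ and $\epsilon>0$ there is a full trajectory $\langle x_i\rangle$ with $d_H(\alpha(\langle x_i\rangle),A)<\epsilon$ and $d_H(\omega(\langle x_i\rangle),A)<\epsilon$. A two-sided $\delta$-pseudo-orbit is $\langle x_i\rangle_{i\in\mathbb Z}$ with $d(f(x_i),x_{i+1})<\delta$ for all $i$. Two-sided cofinal orbital shadowing: for every $\epsilon>0$ there is $\delta>0$ such that for every two-sided $\delta$-pseudo-orbit $\langle x_i\rangle$ there is a full trajectory $\langle z_i\rangle$ such that for every $K\in\mathbb N$ there is $N\ge K$ with $d_H(\overline{\{z_{N+i}\}_{i\ge0}},\overline{\{x_{N+i}\}_{i\ge0}})<\epsilon$ and $d_H(\overline{\{z_{i-N}\}_{i\le0}},\overline{\{x_{i-N}\}_{i\le0}})<\epsilon$. *)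

(* Defs.v *)
From HB Require Import structures.
From mathcomp Require Import all_boot all_order all_algebra.
From mathcomp Require Import all_classical all_reals all_analysis.
Set Implicit Arguments. Unset Strict Implicit. Unset Printing Implicit Defensive.
Import Order.TTheory GRing.Theory Num.Theory.
Local Open Scope classical_set_scope.
Local Open Scope ring_scope.

Section Dyn.
Context {R : realType} {X : metricType R}.

Definition pdist (x : X) (A : set X) : \bar R :=
  ereal_inf [set (mdist x a)%:E | a in A].

Definition hausdorff_dist (A B : set X) : \bar R :=
  Order.max (ereal_sup [set pdist a B | a in A])
            (ereal_sup [set pdist b A | b in B]).

Definition full_trajectory (f : X -> X) (z : int -> X) : Prop :=
  forall i : int, f (z i) = z (i + 1).

Definition pseudo_orbit2 (f : X -> X) (delta : R) (x : int -> X) : Prop :=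
  forall i : int, mdist (f (x i)) (x (i + 1)) < delta.

Definition omega_lim (x : int -> X) : set X :=
  [set y | forall M : int, closure [set x n | n in [set n : int | M < n]] y].

Definition alpha_lim (x : int -> X) : set X :=
  [set y | forall M : int, closure [set x n | n in [set n : int | n < - M]] y].

Definition internally_chain_transitive (f : X -> X) (A : set X) : Prop :=
  forall a b, A a -> A b -> forall delta : R, 0 < delta ->
    exists (N : nat) (y : nat -> X),
      (1 <= N)%N /\ y 0%N = a /\ y N = b /\
      (forall i, (i <= N)%N -> A (y i)) /\
      (forall i, (i < N)%N -> mdist (f (y i)) (y i.+1) < delta).

Definition ICT (f : X -> X) (A : set X) : Prop :=
  closed A /\ A !=set0 /\ internally_chain_transitive f A.

Definition property_Pa (f : X -> X) : Prop :=
  forall A, ICT f A -> forall eps : R, 0 < eps ->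
    exists x : int -> X, full_trajectory f x /\
      (hausdorff_dist (alpha_lim x) A < eps%:E)%E /\
      (hausdorff_dist (omega_lim x) A < eps%:E)%E.

Definition two_sided_cofinal_orbital_shadowing (f : X -> X) : Prop :=
  forall eps : R, 0 < eps -> exists delta : R, 0 < delta /\
    forall x : int -> X, pseudo_orbit2 f delta x ->
    exists z : int -> X, full_trajectory f z /\
      forall K : nat, exists N : nat, (K <= N)%N /\
        (hausdorff_dist (closure [set z (N%:Z + i)%R | i in [set i : int | (0 <= i)%R]])
                        (closure [set x (N%:Z + i)%R | i in [set i : int | (0 <= i)%R]])
           < eps%:E)%E /\
        (hausdorff_dist (closure [set z (i - N%:Z)%R | i in [set i : int | (i <= 0)%R]])
                        (closure [set x (i - N%:Z)%R | i in [set i : int | (i <= 0)%R]])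
           < eps%:E)%E.

End Dyn.

(* Main.v *)
Require Import Defs.
From HB Require Import structures.
From mathcomp Require Import all_boot all_order all_algebra.
From mathcomp Require Import all_classical all_reals all_analysis.
From mathcomp Require Import zify ring lra.
Import Order.TTheory GRing.Theory Num.Theory.
Local Open Scope classical_set_scope.
Local Open Scope ring_scope.

Lemma my_hd_lt (R : realType) (X : metricType R) (A B : set X) (e : \bar R) :
  (hausdorff_dist A B < e)%E ->
  (forall a, A a -> pdist a B < e)%E /\ (forall b, B b -> pdist b A < e)%E.
Proof.
rewrite /hausdorff_dist gt_max => /andP[h1 h2]; split.
- move=> a Aa; apply: le_lt_trans h1; apply: ereal_sup_ubound; by exists a.
- move=> a Aa; apply: le_lt_trans h2; apply: ereal_sup_ubound; by exists a.
Qed.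

Lemma my_pdist_lt (R : realType) (X : metricType R) (a : X) (B : set X) (e : R) :
  (pdist a B < e%:E)%E -> exists2 b, B b & mdist a b < e.
Proof.
move=> /ereal_inf_lt [_ [b Bb <-]]; rewrite lte_fin => h; by exists b.
Qed.

Lemma my_pdist_le (R : realType) (X : metricType R) (a b : X) (B : set X) :
  B b -> (pdist a B <= (mdist a b)%:E)%E.
Proof. by move=> Bb; apply: ereal_inf_lbound; exists b. Qed.

Lemma my_closure_ball (R : realType) (X : metricType R) (S : set X) (w : X) (e : R) :
  closure S w -> 0 < e -> exists2 s, S s & mdist w s < e.
Proof.
move=> + e0 => /(_ _ (@nbhsx_ballx _ _ w e e0)) [s [Ss]]; rewrite ballEmdist /= => h.
by exists s.
Qed.
Arguments my_hd_lt {R X A B e}.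
Arguments my_pdist_lt {R X a B e}.
Arguments my_pdist_le {R X a b B}.
Arguments my_closure_ball {R X S w e}.

Lemma my_core (R : realType) (X : metricType R) (z : int -> X) (xt : nat -> set X)
  (A : set X) (e : R) :
  0 < e -> compact [set: X] ->
  (forall N c, closure (xt N) c -> A c) ->
  (forall a, A a -> exists2 b, mdist a b < e & forall N, xt N b) ->
  (forall K : nat, exists N : nat, (K <= N)%N /\
     (hausdorff_dist (closure [set z (N%:Z + i)%R | i in [set i : int | (0 <= i)%R]])
        (closure (xt N)) < e%:E)%E) ->
  (hausdorff_dist (omega_lim z) A < (4 * e)%:E)%E.
Proof.
move=> e0 cX Hsub Hnet Hsh.
rewrite /hausdorff_dist gt_max; apply/andP; split.
  apply: (@le_lt_trans _ _ e%:E); last by rewrite lte_fin; lra.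
  apply: ge_ereal_sup => _ [y wy <-].
  have [N [_ /my_hd_lt [h1 _]]] := Hsh 0%N.
  have yT : closure [set z (N%:Z + i) | i in [set i : int | 0 <= i]] y.
    apply: closureS (wy (N%:Z - 1)) => _ [n /= Hn <-].
    exists (n - N%:Z); rewrite /=; first lia.
    by congr z; lia.
  have [c cC yc] := my_pdist_lt (h1 _ yT).
  apply: le_trans (my_pdist_le (Hsub _ _ cC)) _; rewrite lee_fin; exact: ltW.
apply: (@le_lt_trans _ _ (3 * e)%:E); last by rewrite lte_fin; lra.
apply: ge_ereal_sup => _ [a Aa <-].
have [b ab bx] := Hnet a Aa.
have claim : forall M : int, exists n, M < n /\ mdist b (z n) < 2 * e.
  move=> M; have [N [KN /my_hd_lt [_ h2]]] := Hsh (absz M).+1.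
  have [w wT bw] := my_pdist_lt (h2 _ (subset_closure (bx N))).
  have [_ [i /= i0 <-] ws] := my_closure_ball wT e0.
  exists (N%:Z + i); split; first lia.
  apply: le_lt_trans (metric_triangle _ w _) _; lra.
pose B (M : int) := [set z n | n in [set n | M < n /\ mdist b (z n) < 2 * e]].
pose F := filter_from [set: int] B.
have FF : Filter F.
  apply: filter_from_filter; first by exists 0.
  move=> i j _ _; exists (Num.max i j) => //.
  move=> _ [n [Hn1 Hn2] <-]; rewrite gt_max in Hn1; move/andP: Hn1 => [h1 h2].
  by split; exists n.
have PF : ProperFilter F.
  apply: filter_from_proper => M _.
  have [n [h1 h2]] := claim M; exists (z n); by exists n.
have [p [_ clp]] := cX F PF filterT.
have pw : omega_lim z p.
  move=> M C nC.
  have [q [[n [Mn _] <-] Cq]] := clp (B M) C (@in_filter_from _ _ setT B M I) nC.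
  by exists (z n); split => //; exists n.
have bp : mdist b p <= 2 * e.
  rewrite leNgt; apply/negP => H.
  have r0 : 0 < mdist b p - 2 * e by lra.
  have [q [[n [_ h] <-] pq]] := clp (B 0) _ (@in_filter_from _ _ setT B 0 I) (@nbhsx_ballx _ _ p _ r0).
  move: pq; rewrite ballEmdist /= => pq.
  have := metric_triangle b (z n) p; rewrite (metric_sym (z n) p); lra.
apply: le_trans (my_pdist_le pw) _; rewrite lee_fin.
have := metric_triangle a b p; lra.
Qed.
Arguments my_core {R X z xt A e}.

Lemma my_net (R : realType) (X : metricType R) (A : set X) (e : R) :
  compact [set: X] -> closed A -> 0 < e ->
  exists s : seq X, (forall b, b \in s -> A b) /\
    (forall a, A a -> exists2 b, b \in s & mdist a b < e).
Proof.
move=> cX clA e0; apply: contrapT => Hno.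
pose D := [set s : seq X | forall b, b \in s -> A b].
pose B (s : seq X) := A `\` [set y | exists2 b, b \in s & mdist y b < e].
have ne : forall s, D s -> B s !=set0.
  move=> s Ds; apply: contrapT => Hn; apply: Hno; exists s; split => // a Aa.
  apply: contrapT => Hna; apply: Hn; exists a; split => //.
pose F := filter_from D B.
have FF : Filter F.
  apply: filter_from_filter; first by exists [::].
  move=> i j Di Dj; exists (i ++ j).
    by move=> b; rewrite mem_cat => /orP[/Di|/Dj].
  move=> y [Ay Hy]; split; split => // -[b bi yb]; apply: Hy; exists b => //;
    by rewrite mem_cat bi ?orbT.
have PF : ProperFilter F by apply: filter_from_proper.
have cA : compact A := subclosed_compact clA cX (@subsetT _ A).
have FA : F A.
  by exists [::] => //; move=> y [].
have [p [Ap clp]] := cA F PF FA.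
have Dp : D [:: p] by move=> b; rewrite inE => /eqP ->.
have [y [[_ Hy] pe]] := clp (B [:: p]) _ (@in_filter_from _ _ D B [:: p] Dp) (@nbhsx_ballx _ _ p _ e0).
apply: Hy; exists p; first by rewrite inE.
by move: pe; rewrite ballEmdist /= metric_sym.
Qed.
Arguments my_net {R X A e}.

Definition my_chain (R : realType) (X : metricType R) (f : X -> X) (d : R) (A : set X)
  (a b : X) (N : nat) (y : nat -> X) : Prop :=
  (1 <= N)%N /\ y 0%N = a /\ y N = b /\
      (forall i, (i <= N)%N -> A (y i)) /\
      (forall i, (i < N)%N -> mdist (f (y i)) (y i.+1) < d).
Arguments my_chain {R X}.

Lemma my_concat (R : realType) (X : metricType R) (f : X -> X) (d : R) (A : set X)
  a b c N1 N2 y1 y2 :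
  my_chain f d A a b N1 y1 -> my_chain f d A b c N2 y2 ->
  let y := fun i => if (i <= N1)%N then y1 i else y2 (i - N1)%N in
  [/\ my_chain f d A a c (N1 + N2) y,
      forall i, (i <= N1)%N -> y i = y1 i &
      forall j, (j <= N2)%N -> y (N1 + j)%N = y2 j].
Proof.
move=> [h1 [h2 [h3 [h4 h5]]]] [k1 [k2 [k3 [k4 k5]]]] y.
have yl : forall i, (i <= N1)%N -> y i = y1 i by move=> i hi; rewrite /y hi.
have yr : forall j, (j <= N2)%N -> y (N1 + j)%N = y2 j.
  move=> j hj; rewrite /y; case: ifP => hh.
    have -> : j = 0%N by lia.
    by rewrite addn0 h3 k2.
  by rewrite addKn.
split => //; split; first lia.
split; first by rewrite yl.
split; first by rewrite yr.
split.
  move=> i hi; case: (leqP i N1) => hi1; first by rewrite yl //; apply: h4.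
  have -> : i = (N1 + (i - N1))%N by lia.
  rewrite yr; last lia; apply: k4; lia.
move=> i hi; case: (ltnP i N1) => hi1.
  rewrite !yl //; [exact: h5 | exact: ltnW].
have -> : i = (N1 + (i - N1))%N by lia.
rewrite -addnS !yr; [|lia|lia]; apply: k5; lia.
Qed.
Arguments my_concat {R X f d A a b c N1 N2 y1 y2}.

Lemma my_cycle (R : realType) (X : metricType R) (f : X -> X) (d : R) (A : set X) a :
  internally_chain_transitive f A -> 0 < d -> A a ->
  forall s : seq X, (forall b, b \in s -> A b) ->
  exists N y, my_chain f d A a a N y /\
    forall b, b \in s -> exists2 i, (i < N)%N & y i = b.
Proof.
move=> ict d0 Aa; elim => [|b s IH] sA.
  have [N [y c]] := ict a a Aa Aa d d0.
  by exists N, y; split.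
have [|N0 [y0 [c0 cov0]]] := IH; first by move=> b' bs; apply: sA; rewrite inE bs orbT.
have Ab : A b by apply: sA; rewrite inE eqxx.
have [N1 [y1 c1]] := ict a b Aa Ab d d0.
have [N2 [y2 c2]] := ict b a Ab Aa d d0.
have [c12 l12 r12] := my_concat c1 c2.
have [c l r] := my_concat c12 c0.
eexists; eexists; split; first exact: c.
move=> b'; rewrite inE => /orP[/eqP ->|bs].
  exists N1.
    move: c2 c0 => [? _] [? _]; lia.
  rewrite l; last lia. rewrite l12 //. by move: c1 => [_ [_ [-> _]]].
have [i hi <-] := cov0 _ bs.
exists (N1 + N2 + i)%N; first lia.
by rewrite r //; apply: ltnW.
Qed.
Arguments my_cycle {R X f d A a}.

Lemma my_xval (T : Type) (N : nat) (y : nat -> T) :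
  (0 < N)%N -> y N = y 0%N ->
  forall (k : nat) (t : int), (k <= N)%N ->
  y (absz (((k%:Z + t * N%:Z) %% N%:Z)%Z)) = y k.
Proof.
move=> N0 yN k t hk.
case: (ltnP k N) => hk2.
  rewrite addrC modzMDl modz_small; first by [].
  apply/andP; split; lia.
have -> : k = N by lia.
have -> : (N%:Z + t * N%:Z) = (t + 1) * N%:Z + 0 by ring.
by rewrite modzMDl modz_small //= yN.
Qed.

Lemma my_xdec (N : nat) (n : int) : (0 < N)%N ->
  exists2 k : nat, (k < N)%N & n = k%:Z + (n %/ N%:Z)%Z * N%:Z /\ absz ((n %% N%:Z)%Z) = k.
Proof.
move=> N0; exists (absz ((n %% N%:Z)%Z)).
  have := ltz_pmod n (_ : 0 < N%:Z); have := @modz_ge0 n N%:Z; lia.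
split => //.
have h := @modz_ge0 n N%:Z.
rewrite gez0_abs; last by apply: h; lia.
by rewrite addrC -divz_eq.
Qed.

Theorem mainTheorem7 (R : realType) (X : metricType R) (f : X -> X) :
  compact [set: X] -> continuous f ->
  two_sided_cofinal_orbital_shadowing f -> property_Pa f.
Proof.
move=> cX _ Hsh A [clA [[a0 Aa0] ict]] E E0.
pose e := E / 4.
have e0 : 0 < e by rewrite /e; lra.
have e4 : 4 * e = E by rewrite /e; field.
have [d [d0 Hd]] := Hsh e e0.
have [s [sA snet]] := my_net cX clA e0.
have [N [y [[N1 [y0 [yN [yA ystep]]]] ycov]]] := my_cycle ict d0 Aa0 s sA.
pose x (n : int) := y (absz ((n %% N%:Z)%Z)).
have yNN : y N = y 0%N by rewrite yN y0.
have xval : forall (k : nat) (t : int), (k <= N)%N -> x (k%:Z + t * N%:Z) = y k.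
  by move=> k t hk; rewrite /x my_xval.
have xA : forall n, A (x n).
  move=> n; have [k hk [_ hx]] := @my_xdec N n N1; rewrite /x hx; apply: yA; exact: ltnW.
have po : pseudo_orbit2 f d x.
  move=> n; have [k hk [hn hx]] := @my_xdec N n N1.
  rewrite /x hx.
  have -> : n + 1 = k.+1%:Z + (n %/ N%:Z)%Z * N%:Z by rewrite {1}hn; lia.
  by rewrite my_xval //; apply: ystep.
have [z [tz Hz]] := Hd x po.
exists z; split => //.
have clA' : forall S, S `<=` A -> closure S `<=` A.
  by move=> S SA; rewrite (closure_id A).1 //; apply: closureS.
have netf : forall a, A a -> exists2 b, mdist a b < e &
    forall M : nat, [set x (M%:Z + i)%R | i in [set i : int | (0 <= i)%R]] b /\
                    [set x (i - M%:Z)%R | i in [set i : int | (i <= 0)%R]] b.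
  move=> a Aa; have [b bs ab] := snet a Aa; exists b => // M.
  have [k hk <-] := ycov b bs.
  split.
    exists (k%:Z - M%:Z + M%:Z * N%:Z) => /=; first nia.
    have -> : M%:Z + (k%:Z - M%:Z + M%:Z * N%:Z) = k%:Z + M%:Z * N%:Z by ring.
    by rewrite xval //; apply: ltnW.
  exists (k%:Z + M%:Z - (M%:Z + 1) * N%:Z) => /=; first nia.
  have -> : k%:Z + M%:Z - (M%:Z + 1) * N%:Z - M%:Z = k%:Z + (- (M%:Z + 1)) * N%:Z by ring.
  by rewrite xval //; apply: ltnW.
split; last first.
  rewrite -e4; apply: (my_core (xt := fun M : nat => [set x (M%:Z + i)%R | i in [set i : int | (0 <= i)%R]])) => //.
  - move=> M c; apply: clA' => _ [i _ <-]; exact: xA.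
  - move=> a Aa; have [b ab hb] := netf a Aa; exists b => // M; exact: (hb M).1.
  - move=> K; have [M [KM [h1 _]]] := Hz K; by exists M.
pose z' := fun n : int => z (- n).
have -> : alpha_lim z = omega_lim z'.
  have EE : forall M : int, [set z n | n in [set n : int | n < - M]] =
                           [set z' n | n in [set n : int | M < n]].
    move=> M; apply/seteqP; split => _ [n /= hn <-].
      by exists (- n); rewrite /z' ?opprK //=; lia.
    by exists (- n) => //=; lia.
  by apply/seteqP; split => w H M; [rewrite -EE | rewrite EE]; apply: H.
rewrite -e4; apply: (my_core (xt := fun M : nat => [set x (i - M%:Z)%R | i in [set i : int | (i <= 0)%R]])) => //.
- move=> M c; apply: clA' => _ [i _ <-]; exact: xA.
- move=> a Aa; have [b ab hb] := netf a Aa; exists b => // M; exact: (hb M).2.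
- move=> K; have [M [KM [_ h2]]] := Hz K; exists M; split => //.
  suff -> : [set z' (M%:Z + i)%R | i in [set i : int | (0 <= i)%R]] =
            [set z (i - M%:Z)%R | i in [set i : int | (i <= 0)%R]] by [].
  apply/seteqP; split => _ [i /= hi <-].
    by exists (- i); [rewrite /=; lia | rewrite /z'; congr z; lia].
  by exists (- i); [rewrite /=; lia | rewrite /z'; congr z; lia].
Qed.
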